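(* Let $q$ be a query program, $P$ a partial model and $\mathcal{T}$ a theory. For a concrete model $M$ let $\mathit{DS}_M(M)=\max_{k\vDash\mathcal{S}_{\mathrm{IPET}}\cup\mathcal{S}_{\mathrm{flow}}(M)}g_{\mathrm{IPET}}(k)$, let $\mathit{DS}_P=\max_{M\in\mathit{solutions}(P',\mathcal{T}')}g_{\mathrm{witness}}(M)$, and let $M^{*}$ (the witness model) be an optimal solution of $\mathit{DS}_P$, i.e. $M^*\in\mathit{solutions}(P',\mathcal{T}')$ with $g_{\mathrm{witness}}(M^* )=\mathit{DS}_P$. Then $M^{*}\in\mathit{solutions}(P,\mathcal{T})$ and $\mathit{DS}_M(M)\le\mathit{DS}_M(M^{*})=\mathit{DS}_P$ for all $M\in\mathit{solutions}(P,\mathcal{T})$.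
   Context: Linear systems. Fix a large finite reserve $\mathcal{X}$ of integer variables. A system of linear inequalities $\mathcal{S}$ is a finite set of inequalities $\sum_j a_{ij}x_j\le y_i$ (equations are written as pairs of inequalities). A valuation $k:\mathcal{X}\to\mathbb{Z}$ is a solution of $\mathcal{S}$ ($k\vDash\mathcal{S}$) if it satisfies all of them; $\mathcal{S}_1\vDash\mathcal{S}_2$ means every solution of $\mathcal{S}_1$ is a solution of $\mathcal{S}_2$. Models. A metamodel is a signature $\Sigma$ of unary class symbols, binary relation symbols, a unary existence symbol $\varepsilon$ and a binary equality symbol $\sim$. A (scoped) partial model $P=\langle O_P,I_P,\mathcal{S}_P\rangle$ consists of a finite object set $O_P$, a 3-valued interpretation $I_P(\sigma):O_P^{\mathrm{arity}(\sigma)}\to\{0,1,\tfrac12\}$ for each $\sigma\in\Sigma$ ($\tfrac12$ = unknown), and a scope $\mathcal{S}_P$ (a system of linear inequalities). $P$ is concrete if all values are $0$ or $1$, $I_P(\varepsilon)(o)=1$ for all $o$, $I_P(\sim)(o_1,o_2)=1$ iff $o_1=o_2$, and $\mathcal{S}_P$ has a solution. Refinement: for $\mathit{abs}:O_Q\to O_P$, $P\succcurlyeq_{\mathit{abs}}Q$ holds if for all $\sigma$ and tuples $\bar q$, $I_P(\sigma)(\mathit{abs}(\bar q))$ is $\tfrac12$ or equals $I_Q(\sigma)(\bar q)$; every $p$ with $I_P(\varepsilon)(p)=1$ has a preimage under $\mathit{abs}$; and $\mathcal{S}_Q\vDash\mathcal{S}_P$. $P\succcurlyeq Q$ if $P\succcurlyeq_{\mathit{abs}}Q$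 for some $\mathit{abs}$. For a first-order predicate $\varphi$ over $\Sigma$ with free variables $v_1,\dots,v_n$ and a concrete model $M$, $M\#\varphi$ is the number of maps $Z:\{v_1,\dots,v_n\}\to O_M$ under which $\varphi$ is true in $M$. A theory $\mathcal{T}=\langle\Phi,r\rangle$ is a finite set $\Phi$ of predicates with a map $r:\Phi\to\mathcal{X}$; a concrete $M$ is compatible with it ($M\vDash\mathcal{T}$) if $\mathcal{S}_M\vDash r(\varphi)=M\#\varphi$ for all $\varphi\in\Phi$. $\mathit{solutions}(P,\mathcal{T})$ is the set of concrete models $M$ with $P\succcurlyeq M$ and $M\vDash\mathcal{T}$. Program and IPET. $q$ is a query program generated from a graph-query search plan: structured code of nested for-loops and if-statements, where each for-loop implements an extend constraint ($C(v)$ with $v$ new, or $R(v_i,v_j)$ with $v_j$ new; it iterates over all candidate bindings of the new variable) and each if-statement implements a check constraint ($C(v_i)$, $R(v_i,v_j)$, $v_i=v_j$, or their negations, over bound variables). $\mathit{BB}$ is its set of basic blocks; its weighted CFG is $\langle V,E,s,t,w,\mathit{tr}\rangle$ with edges $E\subseteq V\times V$, start/end $s,t$, weights $w:E\to\mathbb{N}$, traceability $\mathit{tr}:V\to\mathit{BB}$. $f:E\to\mathcal{X}$ assigns distinct variables to edges. $\mathcal{S}_{\mathrm{IPET}}$ contains $\sum_{e=\langle s,n\rangle}f(e)=1$, $\sum_{e=\langle n,t\rangle}f(e)=1$, flow conservation at every $n\ne s,t$, $-f(e)\le0$, and possibly further low-level flow facts. $g_{\mathrm{IPET}}(k)=\sum_{e\in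 E}w(e)k(f(e))$. Standing assumption (IPET safety): for every execution of $q$ along CFG path $\pi$, the valuation $k_\pi(f(e))=\pi\#e$ satisfies $\mathcal{S}_{\mathrm{IPET}}$ and the execution time is at most $g_{\mathrm{IPET}}(k_\pi)$. Basic block predicates. For $bb\in\mathit{BB}$, $\psi_{bb}$ is the conjunction of the atomic predicates of all for/if statements enclosing $bb$ (extend atoms without their existential quantifier; check literals as-is); $\psi_{bb}=\mathrm{true}$ if none. If $bb$ is the header of loop $\ell$, also $\psi'_{bb}=\psi_{bb}\wedge(\text{atom of }\ell)$. $\Psi$ is the set of all these predicates. By the structure of the generated code, in the run of $q$ on a concrete $M$, executions of a non-header $bb$ correspond one-to-one to matches of $\psi_{bb}$, and executions of a loop header $bb$ to matches of $\psi_{bb}$ plus matches of $\psi'_{bb}$. For concrete $M$, $\mathcal{S}_{\mathrm{flow}}(M)$ contains for each $bb$: $\sum_{e=\langle n_1,n_2\rangle\in E,\mathit{tr}(n_1)=bb}f(e)=M\#\psi_{bb}+M\#\psi'_{bb}$ (loop header) or $=M\#\psi_{bb}$ (otherwise). Witness generation. Given $P=\langle O_P,I_P,\mathcal{S}_P\rangle$ and $\mathcal{T}=\langle\Phi,r\rangle$ (with the range of $f$ disjoint from the range of $r$ and from the variables of $\mathcal{S}_P$), extend $r$ to $r'$ on $\Phi\cup\Psi$ by assigning to each $\psi\in\Psi$ a fresh distinct variable (not in the range of $f$, of $r$, or in $\mathcal{S}_P$). $\mathcal{S}_{\mathrm{merge}}$ contains for each $bb$: $r'(\psi_{bb})+r'(\psi'_{bb})-\sum_{e=\langle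 n_1,n_2\rangle\in E,\mathit{tr}(n_1)=bb}f(e)=0$ if $bb$ is a loop header, else $r'(\psi_{bb})-\sum_{e=\langle n_1,n_2\rangle\in E,\mathit{tr}(n_1)=bb}f(e)=0$. Set $P'=\langle O_P,I_P,\mathcal{S}_P\cup\mathcal{S}_{\mathrm{IPET}}\cup\mathcal{S}_{\mathrm{merge}}\rangle$ and $\mathcal{T}'=\langle\Phi\cup\Psi,r'\rangle$. For a concrete $M$, $g_{\mathrm{witness}}(M)=\max_{k\vDash\mathcal{S}_M}g_{\mathrm{IPET}}(k)$. *)

(* Defs.v *)
From HB Require Import structures.
From mathcomp Require Import all_boot all_order all_algebra.
Set Implicit Arguments. Unset Strict Implicit. Unset Printing Implicit Defensive.
Import Order.TTheory GRing.Theory Num.Theory.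
Local Open Scope ring_scope.

Definition var := nat.
Definition valuation := var -> int.

Record ineq := Ineq { coeffs : seq (var * int); bound : int }.
Definition system := seq ineq.

Definition eval_lin (k : valuation) (cs : seq (var * int)) : int :=
  \sum_(p <- cs) p.2 * k p.1.
Definition sat_ineq (k : valuation) (i : ineq) : bool :=
  eval_lin k (coeffs i) <= bound i.
Definition solves (S : system) (k : valuation) : bool := all (sat_ineq k) S.
Definition entails (S1 S2 : system) : Prop :=
  forall k, solves S1 k -> solves S2 k.
Definition vars_of (S : system) : seq var :=
  flatten [seq [seq p.1 | p <- coeffs i] | i <- S].
Definition eqn (cs : seq (var * int)) (c : int) : system :=
  [:: Ineq cs c; Ineq [seq (p.1, - p.2) | p <- cs] (- c)].
Definition is_max (S : system) (g : valuation -> int) (v : int) : Prop :=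
  (exists k, solves S k /\ g k = v) /\ (forall k, solves S k -> g k <= v).

(* C: class symbols, R: relation symbols; epsilon and ~ are built in.        *)
(* propositional list membership (for element types without decidable equality) *)
Fixpoint In_seq (T : Type) (x : T) (s : seq T) : Prop :=
  if s is y :: s' then y = x \/ In_seq x s' else False.

Inductive tv := F0 | F1 | Fu.   (* 0, 1, 1/2 *)

Record pmodel (C R : Type) := PModel {
  obj : finType;
  icls : C -> obj -> tv;
  irel : R -> obj -> obj -> tv;
  iex : obj -> tv;
  ieq : obj -> obj -> tv;
  scope : system }.
Arguments icls [C R] p _ _.
Arguments irel [C R] p _ _ _.
Arguments iex [C R] p _.
Arguments ieq [C R] p _ _.

Section Models.
Variables C R : Type.

Definition concrete (M : pmodel C R) : Prop :=
  [/\ (forall c o, icls M c o <> Fu),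
      (forall r o1 o2, irel M r o1 o2 <> Fu),
      (forall o, iex M o = F1),
      (forall o1 o2, ieq M o1 o2 <> Fu /\ (ieq M o1 o2 = F1 <-> o1 = o2))
    & exists k, solves (scope M) k].

Definition info_le (x y : tv) : Prop := x = Fu \/ x = y.

Definition refines_by (P Q : pmodel C R) (abs : obj Q -> obj P) : Prop :=
  [/\ (forall c q, info_le (icls P c (abs q)) (icls Q c q)),
      (forall r q1 q2, info_le (irel P r (abs q1) (abs q2)) (irel Q r q1 q2)),
      (forall q, info_le (iex P (abs q)) (iex Q q))
      /\ (forall q1 q2, info_le (ieq P (abs q1) (abs q2)) (ieq Q q1 q2)),
      (forall p, iex P p = F1 -> exists q, abs q = p)
    & entails (scope Q) (scope P)].

Definition refines (P Q : pmodel C R) : Prop := exists abs, @refines_by P Q abs.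

Inductive formula :=
  | FCls of C & nat
  | FRel of R & nat & nat
  | FExist of nat
  | FEq of nat & nat
  | FTrue
  | FNot of formula
  | FAnd of formula & formula
  | FOr of formula & formula
  | FExists of nat & formula.

Fixpoint fv_raw (phi : formula) : seq nat :=
  match phi with
  | FCls _ x => [:: x]
  | FRel _ x y => [:: x; y]
  | FExist x => [:: x]
  | FEq x y => [:: x; y]
  | FTrue => [::]
  | FNot p => fv_raw p
  | FAnd p q => fv_raw p ++ fv_raw q
  | FOr p q => fv_raw p ++ fv_raw q
  | FExists x p => [seq y <- fv_raw p | y != x]
  end.
Definition fv (phi : formula) : seq nat := undup (fv_raw phi).

Definition is1 (x : tv) : bool := if x is F1 then true else false.

Fixpoint holds (M : pmodel C R) (env : nat -> option (obj M)) (phi : formula)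
  : bool :=
  match phi with
  | FCls c x => if env x is Some o then is1 (icls M c o) else false
  | FRel r x y =>
      if env x is Some o1 then if env y is Some o2 then is1 (irel M r o1 o2)
      else false else false
  | FExist x => if env x is Some o then is1 (iex M o) else false
  | FEq x y =>
      if env x is Some o1 then if env y is Some o2 then is1 (ieq M o1 o2)
      else false else false
  | FTrue => true
  | FNot p => ~~ holds env p
  | FAnd p q => holds env p && holds env q
  | FOr p q => holds env p || holds env q
  | FExists x p =>
      [exists o : obj M, holds (fun y => if y == x then Some o else env y) p]
  end.

(* M # phi : number of maps Z : fv phi -> O_M making phi true.  Such a map is
   represented by the tuple of its values on the (duplicate-free) list fv phi. *)
Definition nmatch (M : pmodel C R) (phi : formula) : nat :=
  #|[pred t : (size (fv phi)).-tuple (obj M) |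
       holds (fun y => onth t (index y (fv phi))) phi]|.

(* theories: finite list of pairs (phi, r(phi)) *)
Definition theory := seq (formula * var).

Definition compat (M : pmodel C R) (T : theory) : Prop :=
  forall p, In_seq p T -> entails (scope M) (eqn [:: (p.2, 1)] (nmatch M p.1)%:Z).

Definition solutions (P : pmodel C R) (T : theory) (M : pmodel C R) : Prop :=
  [/\ concrete M, refines P M & compat M T].

Variable BB : eqType.

Inductive ext_atom :=
  | ExtCls of C & nat
  | ExtRel of R & nat & nat.
Inductive chk_atom :=
  | ChkCls of C & nat
  | ChkRel of R & nat & nat
  | ChkEq of nat & nat.

Inductive stmt :=
  | SBlock of BB
  | SFor of ext_atom & BB & seq stmt             (* loop: atom, header, body *)
  | SIf of bool & chk_atom & seq stmt.           (* check literal (bool = positive) *)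

Definition prog := seq stmt.

Definition ext_formula (a : ext_atom) : formula :=
  match a with ExtCls c v => FCls c v | ExtRel r x y => FRel r x y end.
Definition chk_formula (pos : bool) (a : chk_atom) : formula :=
  let f := match a with
           | ChkCls c v => FCls c v | ChkRel r x y => FRel r x y
           | ChkEq x y => FEq x y end in
  if pos then f else FNot f.

Fixpoint conj (l : seq formula) : formula :=
  match l with
  | [::] => FTrue
  | [:: a] => a
  | a :: l' => FAnd a (conj l')
  end.

Fixpoint wf_stmt (bound : seq nat) (s : stmt) : bool :=
  match s with
  | SBlock _ => true
  | SFor (ExtCls _ v) _ body => (v \notin bound) && all (wf_stmt (v :: bound)) body
  | SFor (ExtRel _ x y) _ body =>
      [&& x \in bound, y \notin bound & all (wf_stmt (y :: bound)) body]
  | SIf _ (ChkCls _ v) body => (v \in bound) && all (wf_stmt bound) body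
  | SIf _ (ChkRel _ x y) body =>
      [&& x \in bound, y \in bound & all (wf_stmt bound) body]
  | SIf _ (ChkEq x y) body =>
      [&& x \in bound, y \in bound & all (wf_stmt bound) body]
  end.

(* for every basic block: (label, atoms of enclosing statements (outermost
   first), Some atom-of-the-loop if the block is a loop header) *)
Fixpoint info_stmt (ctx : seq formula) (s : stmt)
  : seq (BB * seq formula * option formula) :=
  match s with
  | SBlock b => [:: (b, ctx, None)]
  | SFor a h body =>
      (h, ctx, Some (ext_formula a))
        :: flatten (map (info_stmt (rcons ctx (ext_formula a))) body)
  | SIf p a body => flatten (map (info_stmt (rcons ctx (chk_formula p a))) body)
  end.

Definition info (q : prog) := flatten (map (info_stmt [::]) q).
Definition bbs (q : prog) : seq BB := [seq x.1.1 | x <- info q].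

Definition query_program (q : prog) : Prop :=
  all (wf_stmt [::]) q /\ uniq (bbs q).

Definition psi_of (x : BB * seq formula * option formula) : formula := conj x.1.2.
Definition psi'_of (x : BB * seq formula * option formula) : option formula :=
  if x.2 is Some a then Some (conj (rcons x.1.2 a)) else None.

Definition Psi (q : prog) : seq formula :=
  flatten [seq psi_of x :: (if psi'_of x is Some p then [:: p] else [::])
          | x <- info q].

Variable V : finType.

Definition edge_sum (E : seq (V * V)) (f : V * V -> var) (a : int)
  (P : pred (V * V)) : seq (var * int) :=
  [seq (f e, a) | e <- E & P e].

Definition S_ipet (E : seq (V * V)) (s t : V) (f : V * V -> var)
  (extra : system) : system :=
  eqn (edge_sum E f 1 (fun e => e.1 == s)) 1
  ++ eqn (edge_sum E f 1 (fun e => e.2 == t)) 1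
  ++ flatten [seq eqn (edge_sum E f 1 (fun e => e.2 == n)
                       ++ edge_sum E f (-1) (fun e => e.1 == n)) 0
             | n <- enum V & (n != s) && (n != t)]
  ++ [seq Ineq [:: (f e, -1)] 0 | e <- E]
  ++ extra.

Definition g_ipet (E : seq (V * V)) (w : V * V -> nat) (f : V * V -> var)
  (k : valuation) : int :=
  \sum_(e <- E) (w e)%:Z * k (f e).

Definition out_bb (E : seq (V * V)) (f : V * V -> var) (tr : V -> BB) (a : int)
  (b : BB) : seq (var * int) :=
  edge_sum E f a (fun e => tr e.1 == b).

Definition S_flow (q : prog) (E : seq (V * V)) (f : V * V -> var) (tr : V -> BB)
  (M : pmodel C R) : system :=
  flatten [seq eqn (out_bb E f tr 1 x.1.1)
                   ((nmatch M (psi_of x))%:Z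
                    + (if psi'_of x is Some p then (nmatch M p)%:Z else 0))
          | x <- info q].

Definition S_merge (q : prog) (E : seq (V * V)) (f : V * V -> var) (tr : V -> BB)
  (rho : formula -> var) : system :=
  flatten [seq eqn ((rho (psi_of x), 1)
                    :: (if psi'_of x is Some p then [:: (rho p, 1)] else [::])
                    ++ out_bb E f tr (-1) x.1.1) 0
          | x <- info q].

Definition P_witness (P : pmodel C R) (extraS : system) : pmodel C R :=
  @PModel C R (obj P) (icls P) (irel P) (iex P) (ieq P)
    (scope P ++ extraS).

Definition T_witness (T : theory) (q : prog) (rho : formula -> var) : theory :=
  T ++ [seq (p, rho p) | p <- Psi q].

End Models.

(* Main.v *)
Require Import Defs.
From mathcomp Require Import all_boot all_order all_algebra.
From mathcomp Require Import ring zify.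
Import Order.TTheory GRing.Theory Num.Theory.
Local Open Scope ring_scope.
Set Implicit Arguments. Unset Strict Implicit.

Lemma solves_cat (S1 S2 : system) k : solves (S1 ++ S2) k = solves S1 k && solves S2 k.
Proof. by rewrite /solves all_cat. Qed.

Lemma In_seq_cat (T : Type) (x : T) a b : In_seq x (a ++ b) <-> In_seq x a \/ In_seq x b.
Proof. elim: a => [|y a IH] /=; first by split; [right|case]. by move: IH; tauto. Qed.

Lemma In_seq_map (T U : Type) (g : T -> U) (x : U) l :
  In_seq x (map g l) -> exists y, In_seq y l /\ x = g y.
Proof. elim: l => [|y l IH] //= [<-|/IH [z [Hz ->]]]; [exists y|exists z]; tauto. Qed.

Lemma In_seq_map_f (T U : Type) (g : T -> U) (x : T) l :
  In_seq x l -> In_seq (g x) (map g l).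
Proof. elim: l => [|y l IH] //= [<-|/IH]; tauto. Qed.

Lemma In_seq_mem (T : Type) (U : eqType) (g : T -> U) x l :
  In_seq x l -> g x \in map g l.
Proof. elim: l => [|y l IH] //= [<-|/IH H]; rewrite inE ?eqxx ?H ?orbT //. Qed.

Lemma In_seq_flatten (T U : Type) (G : T -> seq U) x y l :
  In_seq x l -> In_seq y (G x) -> In_seq y (flatten (map G l)).
Proof. elim: l => [|z l IH] //= [<- H|/IH H1 H2]; apply/In_seq_cat; tauto. Qed.

Lemma all_In (T : Type) (a : pred T) l : (forall x, In_seq x l -> a x) -> all a l.
Proof. elim: l => [|y l IH] //= H; rewrite H /=; [apply: IH|]; auto. Qed.

Lemma In_all (T : Type) (a : pred T) l x : all a l -> In_seq x l -> a x.
Proof. elim: l => [|y l IH] //= /andP[Hy Hl] [<-|]; auto. Qed.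

Lemma has_In (T : Type) (a : pred T) l : has a l -> exists x, In_seq x l /\ a x.
Proof. elim: l => [|y l IH] //= /orP[H|/IH [x [H1 H2]]]; [exists y|exists x]; tauto. Qed.

Lemma In_nth (T : Type) (x0 : T) (l : seq T) (i : nat) : (i < size l)%N -> In_seq (nth x0 l i) l.
Proof. elim: l i => [|y l IH] [|i] //= H; [left|right; apply: IH] =>//. Qed.

Lemma solves_flatten (T : Type) (F : T -> system) l k :
  solves (flatten (map F l)) k = all (fun x => solves (F x) k) l.
Proof. elim: l => [|y l IH] //=; by rewrite solves_cat IH. Qed.

Lemma eval_neg k (cs : seq (var * int)) :
  eval_lin k [seq (p.1, - p.2) | p <- cs] = - eval_lin k cs.
Proof. rewrite /eval_lin big_map -sumrN; apply: eq_bigr => p _ /=; by rewrite mulNr. Qed.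

Lemma solves_eqn k cs c : solves (Defs.eqn cs c) k = (eval_lin k cs == c).
Proof. by rewrite /solves /= /sat_ineq /= eval_neg lerN2 andbT eq_le. Qed.

Lemma eval_cons k v a cs : eval_lin k ((v, a) :: cs) = a * k v + eval_lin k cs.
Proof. by rewrite /eval_lin big_cons. Qed.

Lemma eval_cat k cs1 cs2 : eval_lin k (cs1 ++ cs2) = eval_lin k cs1 + eval_lin k cs2.
Proof. by rewrite /eval_lin big_cat. Qed.

Lemma eval_nil k : eval_lin k [::] = 0.
Proof. by rewrite /eval_lin big_nil. Qed.

Lemma eval_ext k1 k2 cs : all (fun p => k1 p.1 == k2 p.1) cs -> eval_lin k1 cs = eval_lin k2 cs.
Proof.
elim: cs => [|[v a] cs IH] /=; first by rewrite !eval_nil.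
by case/andP=> /eqP H /IH; rewrite !eval_cons H => ->.
Qed.

Definition agree (S : system) (k1 k2 : valuation) :=
  all (fun i => all (fun p => k1 p.1 == k2 p.1) (coeffs i)) S.

Lemma solves_ext S k1 k2 : agree S k1 k2 -> solves S k1 = solves S k2.
Proof.
elim: S => [|i S IH] //= /andP[Hi HS]; rewrite /solves /= -!/(solves _ _) IH //.
by rewrite /sat_ineq (@eval_ext _ _ _ Hi).
Qed.

Lemma agree_vars S k1 k2 : (forall v, v \in vars_of S -> k1 v = k2 v) -> agree S k1 k2.
Proof.
elim: S => [|i S IH] //= H; apply/andP; split.
  apply/allP => p Hp; apply/eqP/H; rewrite /vars_of /= mem_cat map_f //.
apply: IH => v Hv; apply: H; rewrite /vars_of /= mem_cat -/(vars_of S) Hv orbT //.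
Qed.

Lemma agree_cat S1 S2 k1 k2 : agree (S1 ++ S2) k1 k2 = agree S1 k1 k2 && agree S2 k1 k2.
Proof. by rewrite /agree all_cat. Qed.

Lemma agree_eqn cs c k1 k2 : all (fun p => k1 p.1 == k2 p.1) cs -> agree (Defs.eqn cs c) k1 k2.
Proof. by move=> H; rewrite /agree /= all_map H. Qed.

Lemma agree_flatten (T : Type) (F : T -> system) l k1 k2 :
  all (fun x => agree (F x) k1 k2) l -> agree (flatten (map F l)) k1 k2.
Proof. elim: l => [|y l IH] //= /andP[H1 H2]; by rewrite agree_cat H1 IH. Qed.

Lemma agree_edge (V : finType) (E : seq (V * V)) (f : V * V -> var) a P (k1 k2 : valuation) :
  (forall e, e \in E -> k1 (f e) = k2 (f e)) ->
  all (fun p => k1 p.1 == k2 p.1) (edge_sum E f a P).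
Proof. move=> H; rewrite all_map; apply/allP => e; rewrite mem_filter => /andP[_ He] /=; apply/eqP/H/He. Qed.

Lemma eval_edge (V : finType) (E : seq (V * V)) (f : V * V -> var) a P k :
  eval_lin k (edge_sum E f a P) = a * eval_lin k (edge_sum E f 1 P).
Proof. rewrite /eval_lin /edge_sum !big_map mulr_sumr; apply: eq_bigr => e _ /=; by rewrite mul1r. Qed.

Lemma holds_scope C R (M : pmodel C R) sc (env : nat -> option (obj M)) phi :
  @holds C R (@PModel C R (obj M) (icls M) (irel M) (iex M) (ieq M) sc) env phi = @holds C R M env phi.
Proof.
elim: phi env => //= [p IH|p IHp r IHr|p IHp r IHr|x p IH] env; rewrite ?IH ?IHp ?IHr //.
by apply: eq_existsb => o; rewrite IH.
Qed.

Lemma nmatch_scope C R (M : pmodel C R) sc phi :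
  @nmatch C R (@PModel C R (obj M) (icls M) (irel M) (iex M) (ieq M) sc) phi = nmatch M phi.
Proof. apply: eq_card => t; exact: holds_scope. Qed.

Lemma In_has (T : Type) (a : pred T) l x : In_seq x l -> a x -> has a l.
Proof. elim: l => [|y l IH] //= [<- ->//|/IH H /H ->]; by rewrite orbT. Qed.

Lemma solves_flatten_In (T : Type) (F : T -> system) l k x :
  solves (flatten (map F l)) k -> In_seq x l -> solves (F x) k.
Proof. rewrite solves_flatten => H; exact: (@In_all _ (fun y => solves (F y) k) _ _ H). Qed.

Lemma solves_eqn1 k v c : solves (Defs.eqn [:: (v, 1)] c) k = (k v == c).
Proof. by rewrite solves_eqn eval_cons eval_nil mul1r addr0. Qed.

Lemma eval_out_neg (BB : eqType) (V : finType) (E : seq (V * V)) (f : V * V -> var)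
  (tr : V -> BB) b k :
  eval_lin k (out_bb E f tr (-1) b) = - eval_lin k (out_bb E f tr 1 b).
Proof. by rewrite /out_bb eval_edge mulN1r. Qed.

Unset Implicit Arguments.
Set Strict Implicit.

Theorem proposition5p5 (C R : Type) (BB : eqType) (q : prog C R BB)
  (V : finType) (E : seq (V * V)) (s t : V) (w : V * V -> nat)
  (tr : V -> BB) (f : V * V -> var) (extra : system)
  (P : pmodel C R) (T : theory C R) (rho : formula C R -> var)
  (Mstar : pmodel C R) (DSP : int) :
  query_program q ->
  (forall n : V, tr n \in bbs q) ->
  uniq E ->
  {subset vars_of extra <= [seq f e | e <- E]} ->
  {in E &, injective f} ->
  (forall e, e \in E ->
     f e \notin vars_of (scope P) /\ f e \notin [seq p.2 | p <- T]) ->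
  (forall p1 p2, In_seq p1 (Psi q) -> In_seq p2 (Psi q) ->
     rho p1 = rho p2 -> p1 = p2) ->
  (forall p, In_seq p (Psi q) ->
     [/\ rho p \notin vars_of (scope P), rho p \notin [seq x.2 | x <- T]
       & forall e, e \in E -> rho p <> f e]) ->
  let SI := S_ipet E s t f extra in
  let P' := P_witness P (SI ++ S_merge q E f tr rho) in
  let T' := T_witness T q rho in
  solutions P' T' Mstar ->
  is_max (scope Mstar) (g_ipet E w f) DSP ->
  (forall M, solutions P' T' M ->
     forall k, solves (scope M) k -> g_ipet E w f k <= DSP) ->
  [/\ solutions P T Mstar,
      is_max (SI ++ S_flow q E f tr Mstar) (g_ipet E w f) DSP
    & forall M, solutions P T M ->
        forall k, solves (SI ++ S_flow q E f tr M) k -> g_ipet E w f k <= DSP].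
Proof.
move=> Hq Htr HE Hextra Hf Hfdisj Hrho_inj Hrho SI P' T'
  [Hconc Href Hcomp] [[k0 [Hk0 Hg0]] Hmax0] Hopt.
have HPsiT' : forall p, In_seq p (Psi q) -> In_seq (p, rho p) T'.
  move=> p Hp; rewrite /T' /T_witness; apply/In_seq_cat; right.
  exact: (In_seq_map_f (fun p => (p, rho p)) Hp).
have Hpsi : forall x, In_seq x (info q) -> In_seq (psi_of x) (Psi q).
  move=> x Hx; rewrite /Psi; apply: (In_seq_flatten Hx) => /=; by left.
have Hpsi' : forall x p, In_seq x (info q) -> psi'_of x = Some p -> In_seq p (Psi q).
  move=> x p Hx Hxp; rewrite /Psi; apply: (In_seq_flatten Hx) => /=; rewrite Hxp /=; by right; left.
have HsolP : solutions P T Mstar.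
  split=> //.
    case: Href => abs [H1 H2 H3 H4 H5]; exists abs; split => //.
    by move=> k /H5; rewrite /P' /= solves_cat => /andP[].
  move=> p Hp; apply: Hcomp; rewrite /T' /T_witness; apply/In_seq_cat; by left.
have key : forall M, solutions P T M -> forall k,
    solves (SI ++ S_flow q E f tr M) k -> g_ipet E w f k <= DSP.
  move=> M [HcM [abs HrefM] HcompM] k.
  rewrite solves_cat => /andP[HkSI HkF].
  case: HcM => Hc1 Hc2 Hc3 Hc4 [kM HkM].
  have HkMP : solves (scope P) kM by case: HrefM => _ _ _ _; apply.
  pose look v := if has (fun p => rho p == v) (Psi q)
    then (nmatch M (nth (@FTrue C R) (Psi q) (find (fun p => rho p == v) (Psi q))))%:Z
    else kM v.
  pose k2 : valuation := fun v => if v \in [seq f e | e <- E] then k v else look v.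
  have k2E : forall e, e \in E -> k2 (f e) = k (f e) by move=> e He; rewrite /k2 map_f.
  have k2rho : forall p, In_seq p (Psi q) -> k2 (rho p) = nmatch M p.
    move=> p Hp; rewrite /k2; case: ifP => [/mapP [e He Hfe]|_].
      by case: (Hrho p Hp) => _ _ /(_ e He).
    have Hhas : has (fun x => rho x == rho p) (Psi q) by apply: (In_has Hp).
    rewrite /look Hhas; congr (_%:Z); congr nmatch; apply: Hrho_inj => //.
      by apply: In_nth; rewrite -has_find.
    by apply/eqP; apply: (nth_find _ Hhas).
  have k2other : forall v, v \notin [seq f e | e <- E] ->
      (forall p, In_seq p (Psi q) -> rho p <> v) -> k2 v = kM v.
    move=> v Hv Hr; rewrite /k2 (negbTE Hv) /look; case: ifP => // /has_In [p [Hp /eqP]].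
    by move/Hr: Hp.
  pose sc := scope P' ++ flatten [seq Defs.eqn [:: (p.2, 1)] (nmatch M p.1)%:Z | p <- T'].
  have Hk2sol : solves sc k2.
    have eP : scope P' = scope P ++ (SI ++ S_merge q E f tr rho) by [].
    have h1 : solves (scope P) k2.
      rewrite (@solves_ext _ k2 kM) //; apply: agree_vars => v Hv; apply: k2other.
        apply/mapP => -[e He Hfe]; case: (Hfdisj e He) => H _.
        by rewrite -Hfe Hv in H.
      move=> p Hp Hpv; case: (Hrho p Hp) => H _ _.
      by rewrite Hpv Hv in H.
    have h2 : solves SI k2.
      rewrite (@solves_ext _ k2 k) // /SI /S_ipet !agree_cat.
      apply/and5P; split.
      + by apply: agree_eqn; apply: agree_edge.
      + by apply: agree_eqn; apply: agree_edge.
      + apply: agree_flatten; apply/allP => n _; apply: agree_eqn.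
        by rewrite all_cat !agree_edge.
      + rewrite /agree all_map; apply/allP => e He /=; by rewrite k2E // eqxx.
      + apply: agree_vars => v /Hextra Hv; by rewrite /k2 Hv.
    have h3 : solves (S_merge q E f tr rho) k2.
      rewrite /S_merge solves_flatten; apply: all_In => x Hx.
      have := solves_flatten_In HkF Hx.
      rewrite !solves_eqn eval_cons eval_cat eval_out_neg.
      rewrite (@eval_ext k2 k (out_bb E f tr 1 x.1.1)); last by apply: agree_edge.
      rewrite (k2rho _ (Hpsi _ Hx)).
      case Ex: (psi'_of x) => [p|]; rewrite ?eval_cons eval_nil.
        rewrite (k2rho p (Hpsi' _ _ Hx Ex)).
        by move=> /eqP H; apply/eqP; lia.
      by move=> /eqP H; apply/eqP; lia.
    have h4 : solves (flatten [seq Defs.eqn [:: (p.2, 1)] (nmatch M p.1)%:Z | p <- T']) k2.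
      rewrite solves_flatten; apply: all_In => p Hp; rewrite solves_eqn1.
      rewrite /T' /T_witness in Hp.
      case: (proj1 (@In_seq_cat _ p T [seq (p, rho p) | p <- Psi q]) Hp) => [{}Hp|].
        2: by move=> /(@In_seq_map _ _ (fun p => (p, rho p))) [p0 [Hp0 ->]]; rewrite /= k2rho.
      have Hmem := @In_seq_mem _ _ (fun p => p.2) _ _ Hp.
      rewrite k2other.
      - by have := HcompM p Hp kM HkM; rewrite solves_eqn1.
      - apply/mapP => -[e He Hfe]; case: (Hfdisj e He) => _ H.
        by rewrite -Hfe Hmem in H.
      - move=> p' Hp' Hpv; case: (Hrho p' Hp') => _ H _.
        by rewrite Hpv Hmem in H.
    by rewrite /sc eP solves_cat h4 andbT solves_cat h1 solves_cat h2 h3.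
  have HM'sol : solutions P' T' (@PModel C R (obj M) (icls M) (irel M) (iex M) (ieq M) sc).
    split.
    - split; [exact: Hc1|exact: Hc2|exact: Hc3|exact: Hc4|by exists k2].
    - exists abs; case: HrefM => H1 H2 H3 H4 _; split => //.
      by move=> k' /=; rewrite /sc solves_cat => /andP[].
    - move=> p Hp k' /=; rewrite nmatch_scope /sc solves_cat => /andP[_ H].
      exact: (solves_flatten_In H Hp).
  have := Hopt _ HM'sol k2 Hk2sol.
  suff -> : g_ipet E w f k2 = g_ipet E w f k by [].
  by rewrite /g_ipet; apply: eq_big_seq => e He; rewrite k2E.
split; [done| |exact: key].
split; last first.
  exact: key.
exists k0; split; last by [].
have := Href => -[abs [_ _ _ _ H5]].
have : solves (scope P ++ (SI ++ S_merge q E f tr rho)) k0 by apply: H5.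
rewrite !solves_cat => /and3P[_ HSI HSM].
rewrite HSI andTb.
rewrite /S_flow solves_flatten; apply: all_In => x Hx.
have := solves_flatten_In HSM Hx.
rewrite !solves_eqn eval_cons eval_cat eval_out_neg.
have -> : k0 (rho (psi_of x)) = nmatch Mstar (psi_of x).
  by have := Hcomp _ (HPsiT' _ (Hpsi _ Hx)) k0 Hk0; rewrite solves_eqn1 => /eqP.
case Ex: (psi'_of x) => [p|]; rewrite ?eval_cons eval_nil.
  have -> : k0 (rho p) = nmatch Mstar p.
    by have := Hcomp _ (HPsiT' _ (Hpsi' _ _ Hx Ex)) k0 Hk0; rewrite solves_eqn1 => /eqP.
  move=> /eqP H; apply/eqP; lia.
move=> /eqP H; apply/eqP; lia.
Qed.
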